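(* Consider Algorithm SS-SQP (described in the context) under the standing assumptions (A1), (A2). There exists a constant $\kappa_l>0$ such that for all $k\in\mathbb{N}$, $$\Delta l(x_k,\bar\tau_k,\bar g_k,\bar d_k)\ge\kappa_l\bar\tau_k(\|\bar d_k\|^2+\|c_k\|).$$
   Context: Problem: $\min_{x\in\mathbb{R}^n}f(x)$ s.t. $c(x)=0$ with $f,c$ continuously differentiable, $c:\mathbb{R}^n\to\mathbb{R}^m$, $m\le n$; $c_k=c(x_k)$, $J_k=\nabla c(x_k)^T$; $\|\cdot\|$ Euclidean norm. $\Delta l(x,\tau,g,d)=-\tau g^Td+\|c(x)\|_1$. Standing assumption (A1): there is an open convex set $\mathcal{X}$ containing all iterates and trial iterates; $f$ bounded below, $\nabla f$ $L$-Lipschitz and bounded, $c$ bounded, each $\nabla c_i$ Lipschitz and bounded on $\mathcal{X}$; singular values of $\nabla c(x)^T$ bounded away from zero on $\mathcal{X}$. (A2): $H_k$ symmetric, chosen independently of $\bar g_k$, $\|H_k\|\le\kappa_H$, $u^TH_ku\ge\zeta\|u\|^2$ for $u\in\mathrm{Null}(J_k)$, $\kappa_H,\zeta>0$. Algorithm SS-SQP: inputs $x_0$, $\bar\tau_{-1}>0$, $\alpha_{\max}\in(0,1]$, $\alpha_0\in(0,\alpha_{\max}]$, $\epsilon_f\ge0$, $\gamma,\theta,\sigma,\epsilon_\tau\in(0,1)$. At iteration $k$: random gradient estimate $\bar g_k$; solve $\begin{bmatrix}H_k & J_k^T\\ J_k&0\end{bmatrix}\begin{bmatrix}\bar d_k\\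 \bar y_k\end{bmatrix}=-\begin{bmatrix}\bar g_k\\ c_k\end{bmatrix}$; $\bar\tau_k^{\rm trial}=\infty$ if $\bar g_k^T\bar d_k+\max\{\bar d_k^TH_k\bar d_k,0\}\le0$, else $(1-\sigma)\|c_k\|_1/(\bar g_k^T\bar d_k+\max\{\bar d_k^TH_k\bar d_k,0\})$; $\bar\tau_k=\bar\tau_{k-1}$ if $\bar\tau_{k-1}\le\bar\tau_k^{\rm trial}$, else $\min\{(1-\epsilon_\tau)\bar\tau_{k-1},\bar\tau_k^{\rm trial}\}$; $x_k^+=x_k+\alpha_k\bar d_k$; with objective estimates $\bar f$ and $\bar\phi(x,\tau;\xi)=\tau\bar f(x;\xi)+\|c(x)\|_1$, set $x_{k+1}=x_k^+$, $\alpha_{k+1}=\min\{\alpha_{\max},\alpha_k/\gamma\}$ if $\bar\phi(x_k^+,\bar\tau_k;\xi_k^+)\le\bar\phi(x_k,\bar\tau_k;\xi_k^0)-\alpha_k\theta\Delta l(x_k,\bar\tau_k,\bar g_k,\bar d_k)+2\bar\tau_k\epsilon_f$, else $x_{k+1}=x_k$, $\alpha_{k+1}=\gamma\alpha_k$. *)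

(* Defs.v *)
From mathcomp Require Import all_boot all_order all_algebra.
From mathcomp Require Import reals.
Set Implicit Arguments. Unset Strict Implicit. Unset Printing Implicit Defensive.
Import Order.TTheory GRing.Theory Num.Theory.
Local Open Scope ring_scope.

Section SSSQP.
Variable R : realType.

Definition dotv (n : nat) (u v : 'cV[R]_n) : R := \sum_(i < n) u i 0 * v i 0.
Definition enorm (n : nat) (v : 'cV[R]_n) : R := Num.sqrt (dotv v v).
Definition norm1 (n : nat) (v : 'cV[R]_n) : R := \sum_(i < n) `|v i 0|.

Definition has_gradient_at (n : nat) (f : 'cV[R]_n -> R) (g x : 'cV[R]_n) : Prop :=
  forall e : R, 0 < e -> exists2 d : R, 0 < d & forall y : 'cV[R]_n,
    enorm (y - x) < d -> `|f y - f x - dotv g (y - x)| <= e * enorm (y - x).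

Definition cont_at (n p : nat) (F : 'cV[R]_n -> 'cV[R]_p) (x : 'cV[R]_n) : Prop :=
  forall e : R, 0 < e -> exists2 d : R, 0 < d & forall y : 'cV[R]_n,
    enorm (y - x) < d -> enorm (F y - F x) < e.

Definition C1_with_gradient (n : nat) (f : 'cV[R]_n -> R)
    (gradf : 'cV[R]_n -> 'cV[R]_n) : Prop :=
  forall x, has_gradient_at f (gradf x) x /\ cont_at gradf x.

Definition C1_with_jacobian (n m : nat) (c : 'cV[R]_n -> 'cV[R]_m)
    (J : 'cV[R]_n -> 'M[R]_(m, n)) : Prop :=
  forall i : 'I_m, C1_with_gradient (fun x => c x i 0) (fun x => (row i (J x))^T).

Definition open_set (n : nat) (X : 'cV[R]_n -> Prop) : Prop :=
  forall x, X x -> exists2 r : R, 0 < r & forall y, enorm (y - x) < r -> X y.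

Definition convex_set (n : nat) (X : 'cV[R]_n -> Prop) : Prop :=
  forall x y (t : R), X x -> X y -> 0 <= t <= 1 -> X ((1 - t) *: x + t *: y).

Definition lipschitz_on (n p : nat) (X : 'cV[R]_n -> Prop)
    (F : 'cV[R]_n -> 'cV[R]_p) (L : R) : Prop :=
  forall x y, X x -> X y -> enorm (F x - F y) <= L * enorm (x - y).

Definition bounded_on (n p : nat) (X : 'cV[R]_n -> Prop) (F : 'cV[R]_n -> 'cV[R]_p) : Prop :=
  exists B : R, forall x, X x -> enorm (F x) <= B.

(* s is a singular value of A : 'M_(m,n) (with m <= n): s >= 0 and s^2 is an
   eigenvalue of A A^T (these are the m singular values of A) *)
Definition singular_value (m n : nat) (A : 'M[R]_(m, n)) (s : R) : Prop :=
  0 <= s /\ eigenvalue (A *m A^T) (s ^+ 2).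

Definition opnorm_le (n : nat) (H : 'M[R]_n) (k : R) : Prop :=
  forall u : 'cV[R]_n, enorm (H *m u) <= k * enorm u.

Definition Delta_l (n m : nat) (c : 'cV[R]_n -> 'cV[R]_m) (x : 'cV[R]_n)
    (tau : R) (g d : 'cV[R]_n) : R :=
  - tau * dotv g d + norm1 (c x).

(* trial merit parameter; None encodes +infinity *)
Definition tau_trial (n m : nat) (sigma : R) (ck : 'cV[R]_m) (H : 'M[R]_n)
    (g d : 'cV[R]_n) : option R :=
  let den := dotv g d + Num.max (dotv d (H *m d)) 0 in
  if den <= 0 then None else Some ((1 - sigma) * norm1 ck / den).

Definition tau_update (eps_tau taup : R) (tr : option R) : R :=
  match tr with
  | None => taup
  | Some t => if taup <= t then taup else Num.min ((1 - eps_tau) * taup) t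
  end.

End SSSQP.

(* Main.v *)
From mathcomp Require Import all_boot all_order all_algebra.
From mathcomp Require Import reals.
From mathcomp Require Import ring lra.
From mathcomp Require Import classical_sets boolp topology normedtype derive matrix_normedtype.
Require Import Defs.
Import Order.TTheory GRing.Theory Num.Theory.
Import numFieldNormedType.Exports.
Set Implicit Arguments. Unset Strict Implicit. Unset Printing Implicit Defensive.
Local Open Scope ring_scope.
Lemma dotvE {R : realType} n (u v : 'cV[R]_n) : dotv u v = (u^T *m v) 0 0.
Proof. by rewrite /dotv !mxE; apply: eq_bigr => i _; rewrite !mxE. Qed.

Lemma dotvC {R : realType} n (u v : 'cV[R]_n) : dotv u v = dotv v u.
Proof. by rewrite /dotv; apply: eq_bigr => i _; rewrite mulrC. Qed.

Lemma dotvDl {R : realType} n (u w v : 'cV[R]_n) : dotv (u + w) v = dotv u v + dotv w v.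
Proof. by rewrite /dotv -big_split; apply: eq_bigr => i _; rewrite !mxE mulrDl. Qed.

Lemma dotvDr {R : realType} n (u w v : 'cV[R]_n) : dotv v (u + w) = dotv v u + dotv v w.
Proof. by rewrite dotvC dotvDl !(dotvC v). Qed.

Lemma dotvZl {R : realType} n (a : R) (u v : 'cV[R]_n) : dotv (a *: u) v = a * dotv u v.
Proof. by rewrite /dotv mulr_sumr; apply: eq_bigr => i _; rewrite !mxE mulrA. Qed.

Lemma dotvZr {R : realType} n (a : R) (u v : 'cV[R]_n) : dotv v (a *: u) = a * dotv v u.
Proof. by rewrite dotvC dotvZl dotvC. Qed.

Lemma dotvNl {R : realType} n (u v : 'cV[R]_n) : dotv (- u) v = - dotv u v.
Proof. by rewrite -scaleN1r dotvZl mulN1r. Qed.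

Lemma dotvNr {R : realType} n (u v : 'cV[R]_n) : dotv v (- u) = - dotv v u.
Proof. by rewrite dotvC dotvNl dotvC. Qed.

Lemma dotv0r {R : realType} n (v : 'cV[R]_n) : dotv v 0 = 0.
Proof. by rewrite /dotv big1 // => i _; rewrite mxE mulr0. Qed.

Lemma dotv_ge0 {R : realType} n (u : 'cV[R]_n) : 0 <= dotv u u.
Proof. by rewrite /dotv sumr_ge0 // => i _; rewrite -expr2 sqr_ge0. Qed.

Lemma dotv_eq0 {R : realType} n (u : 'cV[R]_n) : dotv u u = 0 -> u = 0.
Proof.
move=> /eqP; rewrite /dotv psumr_eq0 => [/allP H|i _]; last by rewrite -expr2 sqr_ge0.
apply/matrixP => i j; rewrite (ord1 j) !mxE.
by have := H i (mem_index_enum _); rewrite -expr2 sqrf_eq0 => /eqP.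
Qed.

Lemma dotv_mulmx {R : realType} n p (A : 'M[R]_(n, p)) u v :
  dotv u (A *m v) = dotv (A^T *m u) v.
Proof. by rewrite !dotvE trmx_mul trmxK mulmxA. Qed.

Lemma young {R : realType} n (u v : 'cV[R]_n) (t : R) : 0 < t ->
  2 * dotv u v <= t * dotv u u + dotv v v / t.
Proof.
move=> t0; have := dotv_ge0 (t *: u - v).
rewrite dotvDl !dotvDr !dotvNl !dotvNr !dotvZl !dotvZr (dotvC v u) => h.
rewrite -(ler_pM2l t0) mulrDr.
have -> : t * (dotv v v / t) = dotv v v by field; rewrite gt_eqF.
nra.
Qed.

Lemma enorm_sq {R : realType} n (u : 'cV[R]_n) : enorm u ^+ 2 = dotv u u.
Proof. by rewrite /enorm sqr_sqrtr // dotv_ge0. Qed.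
Lemma continuous_sum {R : realType} {T : topologicalType} (I : Type) (r : seq I)
  (F : I -> T -> R) : (forall i, continuous (F i)) ->
  continuous (fun x => \sum_(i <- r) F i x).
Proof.
move=> HF; elim: r => [|a r IH].
  under eq_fun do rewrite big_nil. exact: cst_continuous.
under eq_fun do rewrite big_cons.
by move=> x; apply: continuousD; [exact: HF|exact: IH].
Qed.

Lemma min_sphere {R : realType} m (f : 'rV[R]_m.+1 -> R) : continuous f ->
  exists2 v : 'rV[R]_m.+1, dotv v^T v^T = 1 &
     forall u, dotv u^T u^T = 1 -> f v <= f u.
Proof.
move=> fc.
pose g := fun v : 'rV[R]_m.+1 => \sum_i v 0 i * v 0 i.
have gE v : dotv v^T v^T = g v by rewrite /dotv /g; apply: eq_bigr => i _; rewrite !mxE.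
have gc : continuous g.
  apply: continuous_sum => i x; apply: continuousM; exact: coord_continuous.
pose S := (g @^-1` [set 1%R])%classic.
have Scl : closed S.
  apply: preimage_closed; last exact: closed_eq.
  by move=> x _; exact: gc.
have Scube : (S `<=` [set v : 'rV[R]_m.+1 | forall i, `[(-1 : R), 1]%classic (v ord0 i)])%classic.
  move=> v; rewrite /S /= => gv i.
  have : v 0 i * v 0 i <= g v.
    by rewrite /g (bigD1 i) //= lerDl sumr_ge0 // => j _; rewrite -expr2 sqr_ge0.
  rewrite gv => h; rewrite /= in_itv /=; apply/andP; split; nra.
have Scpt : compact S.
  apply: subclosed_compact Scl _ Scube.
  apply: (@rV_compact _ _ (fun=> `[(-1 : R), 1]%classic)) => _; exact: segment_compact.
have S0 : (S !=set0)%classic.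
  exists (delta_mx 0 ord0); rewrite /S /= /g (bigD1 ord0) //= big1 ?mxE ?eqxx ?mulr1 ?addr0 //.
  by move=> j /negbTE hj; rewrite mxE hj andbF mul0r.
have [v vS vmin] := compact_EVT_min S0 Scpt (continuous_subspaceT fc).
exists v; first by rewrite gE; move: vS; rewrite inE.
by move=> u uS; apply: vmin; rewrite inE /S /= -gE.
Qed.

Lemma rayleigh {R : realType} m (M : 'M[R]_m.+1) : M^T = M ->
  (forall w, 0 <= dotv w (M *m w)) ->
  exists lam, [/\ eigenvalue M lam, 0 <= lam &
     forall w, lam * dotv w w <= dotv w (M *m w)].
Proof.
move=> MT Mpsd.
pose f := fun v : 'rV[R]_m.+1 => dotv v^T (M *m v^T).
have fc : continuous f.
  have fE : f = fun v => \sum_i v 0 i * \sum_j M i j * v 0 j.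
    apply: funext => v; rewrite /f /dotv; apply: eq_bigr => i _.
    by rewrite !mxE; congr (_ * _); apply: eq_bigr => j _; rewrite !mxE.
  rewrite fE; apply: continuous_sum => i x; apply: continuousM.
    exact: coord_continuous.
  apply: continuous_sum => j y; apply: continuousM.
    exact: cst_continuous.
  exact: coord_continuous.
have [v0 v0S v0min] := min_sphere fc.
pose lam := f v0.
have Hgen : forall w, lam * dotv w w <= dotv w (M *m w).
  move=> w; have [->|wn0] := eqVneq w 0.
    by rewrite mulmx0 !dotv0r mulr0.
  pose s := dotv w w.
  have s0 : 0 < s.
    rewrite lt_def dotv_ge0 andbT; apply/eqP => /dotv_eq0 h.
    by rewrite h eqxx in wn0.
  pose r := Num.sqrt s.
  have r0 : 0 < r by rewrite sqrtr_gt0.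
  have rs : r ^+ 2 = s by rewrite sqr_sqrtr // ltW.
  have := v0min ((r^-1 *: w)^T).
  rewrite /f trmxK -scalemxAr !dotvZl !dotvZr -/s.
  have h1 : r^-1 * (r^-1 * s) = 1.
    by rewrite -rs; field; rewrite gt_eqF.
  move=> /(_ h1).
  have -> : r^-1 * (r^-1 * dotv w (M *m w)) = dotv w (M *m w) / s.
    by rewrite -rs; field; rewrite gt_eqF.
  by rewrite ler_pdivlMr.
have lam0 : 0 <= lam by exact: Mpsd.
pose w0 := v0^T.
have hw0 : dotv w0 w0 = 1 by [].
have Meig : M *m w0 = lam *: w0.
  pose p := fun w => dotv w (M *m w) - lam * dotv w w.
  have pge : forall w, 0 <= p w by move=> w; rewrite subr_ge0 Hgen.
  have aeq : dotv w0 (M *m w0) = lam * dotv w0 w0 by rewrite hw0 mulr1.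
  pose e := M *m w0 - lam *: w0.
  have ee : dotv e e = dotv (M *m w0) e - lam * dotv w0 e.
    by rewrite /e dotvDl dotvNl dotvZl.
  have key : forall t, 0 <= 2 * t * dotv e e + t ^+ 2 * p e.
    move=> t; have h := pge (w0 + t *: e).
    rewrite /p mulmxDr -scalemxAr !dotvDl !dotvDr !dotvZl !dotvZr in h.
    rewrite (dotv_mulmx M w0 e) MT (dotvC e (M *m w0)) aeq ee (dotvC e w0) in h.
    rewrite /p ee; apply: (le_trans h); rewrite le_eqVlt; apply/orP; left; apply/eqP.
    ring.
  have D0 : dotv e e = 0.
    have P0 := pge e; have D0 := dotv_ge0 e.
    set D := dotv e e in key D0 *; set P := p e in key P0 *.
    have hP : 0 < P + 2 by lra.
    pose u := D / (P + 2).
    have hu : u * (P + 2) = D by rewrite /u; field; rewrite gt_eqF.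
    have := key (- u).
    rewrite -hu => k.
    have u0 : u ^+ 2 = 0 by nra.
    by move/eqP: u0; rewrite sqrf_eq0 => /eqP ->; rewrite mul0r.
  by apply/eqP; rewrite -subr_eq0; apply/eqP; apply: dotv_eq0.
exists lam; split => //.
apply/eigenvalueP; exists w0^T.
  by rewrite -[in LHS]MT -trmx_mul Meig linearZ.
apply/eqP => h; move: hw0; rewrite -(trmxK w0) h /dotv big1 => [/eqP|i _].
  by rewrite eq_sym oner_eq0.
by rewrite !mxE mul0r.
Qed.

Lemma young2 {R : realType} n (u v : 'cV[R]_n) (t : R) :
  2 * t * dotv u v <= t ^+ 2 * dotv u u + dotv v v.
Proof.
have := dotv_ge0 (t *: u - v).
rewrite dotvDl !dotvDr !dotvNl !dotvNr !dotvZl !dotvZr (dotvC v u) => h.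
nra.
Qed.

Lemma decomp_bound {R : realType} n m (J : 'M[R]_(m, n)) (Hk : 'M[R]_n)
  (d : 'cV[R]_n) (c : 'cV[R]_m) (a zeta kH : R) :
  0 < a -> 0 < zeta -> 0 < kH ->
  (forall w, a * dotv w w <= dotv w ((J *m J^T) *m w)) ->
  Hk^T = Hk -> opnorm_le Hk kH ->
  (forall u, J *m u = 0 -> zeta * enorm u ^+ 2 <= dotv u (Hk *m u)) ->
  J *m d = - c ->
  a * (zeta ^+ 2 * dotv d d) <= a * (4 * zeta * Num.max (dotv d (Hk *m d)) 0) +
     (4 * kH * zeta + 8 * kH ^+ 2 + 2 * zeta ^+ 2) * dotv c c.
Proof.
move=> a0 z0 k0 Hray HT Hop Hnull Jd.
set M := J *m J^T.
have MT : M^T = M by rewrite /M trmx_mul trmxK.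
have Mu : M \in unitmx.
  rewrite -row_free_unit; apply: inj_row_free => v vM.
  have h : M *m v^T = 0 by rewrite -[in LHS]MT -trmx_mul vM trmx0.
  have := Hray v^T; rewrite h dotv0r => h2.
  have : dotv v^T v^T = 0 by have := dotv_ge0 v^T; nra.
  by move/dotv_eq0 => /(congr1 trmx); rewrite trmxK trmx0.
pose w := invmx M *m (- c).
have Mw : M *m w = - c by rewrite /w mulKVmx.
pose v := J^T *m w.
pose u := d - v.
have Ju : J *m u = 0 by rewrite /u mulmxBr /v mulmxA -/M Mw Jd subrr.
have du : d = u + v by rewrite /u subrK.
have Vv : dotv v v = dotv w (M *m w) by rewrite /v /M -mulmxA [RHS]dotv_mulmx.
have Vb : a * dotv v v <= dotv c c.
  have h1 := Hray w; rewrite -Vv in h1.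
  have h2 := young2 w (- c) a.
  rewrite Mw dotvNr in Vv; rewrite !dotvNl !dotvNr ?opprK in h2.
  nra.
clearbody u; clearbody v.
set U := dotv u u; set V := dotv v v.
have Z : dotv (Hk *m v) (Hk *m v) <= kH ^+ 2 * V.
  have h := Hop v.
  have e1 : 0 <= enorm (Hk *m v) by exact: sqrtr_ge0.
  have e2 : 0 <= enorm v by exact: sqrtr_ge0.
  rewrite /V -!enorm_sq; nra.
have X : zeta * U <= dotv u (Hk *m u) by rewrite /U -enorm_sq; exact: Hnull.
have F1 := young2 (- u) (Hk *m v) (zeta / 2).
have F2 := young2 (- v) (Hk *m v) kH.
have F3 := young2 u v 1.
rewrite !dotvNl !dotvNr ?opprK -/U -/V in F1 F2.
rewrite -/U -/V in F3.
have sym : dotv v (Hk *m u) = dotv u (Hk *m v).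
  by rewrite dotv_mulmx HT dotvC.
have DHD : dotv d (Hk *m d) = dotv u (Hk *m u) + 2 * dotv u (Hk *m v) + dotv v (Hk *m v).
  rewrite du mulmxDr !dotvDl !dotvDr sym; ring.
have DD : dotv d d = U + 2 * dotv u v + V.
  rewrite du !dotvDl !dotvDr (dotvC v u) /U /V; ring.
rewrite /U /V in X Z F1 F2 F3 DD Vb *.
have Y1 : - dotv v (Hk *m v) <= kH * dotv v v.
  have : kH * (- dotv v (Hk *m v) - kH * dotv v v) <= 0 by nra.
  by rewrite pmulr_rle0 // subr_le0.
have G : zeta ^+ 2 * dotv d d <= 4 * zeta * Num.max (dotv d (Hk *m d)) 0 +
     (4 * kH * zeta + 8 * kH ^+ 2 + 2 * zeta ^+ 2) * dotv v v.
  have hm : dotv d (Hk *m d) <= Num.max (dotv d (Hk *m d)) 0 by rewrite le_max lexx.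
  move: hm; set mx := Num.max _ 0 => hm; rewrite DHD in hm.
  have zhm : 4 * zeta * (dotv u (Hk *m u) + 2 * dotv u (Hk *m v) + dotv v (Hk *m v)) <= 4 * zeta * mx.
    by rewrite ler_pM2l // mulr_gt0.
  have zF3 : zeta ^+ 2 * (2 * 1 * dotv u v) <= zeta ^+ 2 * (1 ^+ 2 * dotv u u + dotv v v).
    by rewrite ler_pM2l // exprn_gt0.
  have zX : zeta * (zeta * dotv u u) <= zeta * dotv u (Hk *m u) by rewrite ler_pM2l.
  have zY : zeta * (- dotv v (Hk *m v)) <= zeta * (kH * dotv v v) by rewrite ler_pM2l.
  rewrite DD; lra.
have V0 : 0 <= dotv v v by exact: dotv_ge0.
have cc0 : 0 <= dotv c c by exact: dotv_ge0.
have K0 : 0 <= 4 * kH * zeta + 8 * kH ^+ 2 + 2 * zeta ^+ 2.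
  have : 0 <= kH * zeta by rewrite mulr_ge0 // ltW.
  have : 0 <= kH ^+ 2 by rewrite exprn_ge0 // ltW.
  have : 0 <= zeta ^+ 2 by rewrite exprn_ge0 // ltW.
  lra.
move: G; set mx := Num.max _ 0; set K := (4 * kH * zeta + _ + _) in K0 * => G.
have aG : a * (zeta ^+ 2 * dotv d d) <= a * (4 * zeta * mx + K * dotv v v).
  by rewrite ler_pM2l.
have KV : K * (a * dotv v v) <= K * dotv c c by rewrite ler_wpM2l.
lra.
Qed.

Lemma ray_sv {R : realType} m n (J : 'M[R]_(m, n)) (smin : R) : 0 < smin ->
  (forall s, singular_value J s -> smin <= s) ->
  forall w, smin ^+ 2 * dotv w w <= dotv w ((J *m J^T) *m w).
Proof.
move=> s0 Hs; case: m J Hs => [|m'] J Hs w.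
  by rewrite /dotv !big_ord0 mulr0.
have psd : forall w, 0 <= dotv w ((J *m J^T) *m w).
  by move=> w'; rewrite -mulmxA dotv_mulmx dotv_ge0.
have MT : (J *m J^T)^T = J *m J^T by rewrite trmx_mul trmxK.
have [lam [eig lam0 Hl]] := rayleigh MT psd.
have sv : singular_value J (Num.sqrt lam).
  by split; [exact: sqrtr_ge0 | rewrite sqr_sqrtr].
have h := Hs _ sv.
have hs : Num.sqrt lam ^+ 2 = lam by rewrite sqr_sqrtr.
have h2 : smin ^+ 2 <= lam.
  have := sqrtr_ge0 lam; nra.
apply: le_trans (Hl w); rewrite ler_wpM2r // dotv_ge0 //.
Qed.

Lemma norm1_ge0 {R : realType} n (v : 'cV[R]_n) : 0 <= norm1 v.
Proof. by rewrite sumr_ge0. Qed.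

Lemma enorm_ge0 {R : realType} n (v : 'cV[R]_n) : 0 <= enorm v.
Proof. exact: sqrtr_ge0. Qed.

Lemma enorm_le_norm1 {R : realType} n (v : 'cV[R]_n) : enorm v <= norm1 v.
Proof.
have h : dotv v v <= norm1 v ^+ 2 /\ 0 <= norm1 v.
  rewrite /dotv /norm1; elim/big_rec2: _ => [|i y1 y2 _ [h1 h2]].
    by rewrite expr0n /= lexx.
  have e : v i 0 * v i 0 = `|v i 0| ^+ 2 by rewrite -expr2 real_normK ?num_real.
  have := normr_ge0 (v i 0).
  rewrite e; split; nra.
have := enorm_sq v; have := enorm_ge0 v; case: h => h1 h2; nra.
Qed.

Lemma tau_trial_ge0 {R : realType} n m (sigma : R) (ck : 'cV[R]_m) (H : 'M[R]_n) g d t :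
  sigma < 1 -> tau_trial sigma ck H g d = Some t -> 0 <= t.
Proof.
move=> s1; rewrite /tau_trial; case: ifP => // /negbT; rewrite -ltNge => hd [<-].
apply: divr_ge0; last exact: ltW.
apply: mulr_ge0; last exact: norm1_ge0.
by rewrite subr_ge0 ltW.
Qed.

Lemma tau_update_props {R : realType} (eps taup : R) (tr : option R) :
  0 < eps < 1 -> 0 <= taup -> (forall t, tr = Some t -> 0 <= t) ->
  [/\ 0 <= tau_update eps taup tr, tau_update eps taup tr <= taup &
      forall t, tr = Some t -> tau_update eps taup tr <= t].
Proof.
move=> /andP[e0 e1] tp Htr; case: tr Htr => [t|] Htr /=; last by split.
have t0 := Htr t erefl.
case: ifP => [ht|/negbT]; first by split => // t' [<-].
rewrite -ltNge => ht; split.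
- by rewrite le_min t0 andbT mulr_ge0 // subr_ge0 ltW.
- by rewrite ge_min; apply/orP; left; rewrite ler_piMl // gerBl ltW.
- by move=> t' [<-]; rewrite ge_min lexx orbT.
Qed.

Lemma delta_lower {R : realType} n m (c : 'cV[R]_n -> 'cV[R]_m) x (H : 'M[R]_n)
  (g d : 'cV[R]_n) (tau sigma : R) :
  0 <= tau -> 0 < sigma < 1 ->
  (forall t, tau_trial sigma (c x) H g d = Some t -> tau <= t) ->
  tau * Num.max (dotv d (H *m d)) 0 + sigma * norm1 (c x) <= Delta_l c x tau g d.
Proof.
move=> t0 /andP[s0 s1] Ht; rewrite /Delta_l.
have n0 := norm1_ge0 (c x).
move: Ht; rewrite /tau_trial; set mx := Num.max _ 0; case: ifP => hd Ht.
  have := mulr_ge0_le0 t0 hd.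
  nra.
have := Ht _ erefl; move/negbT: hd; rewrite -ltNge => hd.
rewrite ler_pdivlMr // => h.
lra.
Qed.
Theorem lemma3p12
  (R : realType) (n m : nat) (Hmn : (m <= n)%N)
  (f : 'cV[R]_n -> R) (gradf : 'cV[R]_n -> 'cV[R]_n)
  (c : 'cV[R]_n -> 'cV[R]_m) (J : 'cV[R]_n -> 'M[R]_(m, n))
  (X : 'cV[R]_n -> Prop)
  (* smoothness *)
  (Hf : C1_with_gradient f gradf) (Hc : C1_with_jacobian c J)
  (* (A1) on the open convex set X *)
  (HXo : open_set X) (HXc : convex_set X)
  (Hfb : exists flow : R, forall x, X x -> flow <= f x)
  (HgL : exists L : R, 0 < L /\ lipschitz_on X gradf L)
  (Hgb : bounded_on X gradf)
  (Hcb : bounded_on X c)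
  (HcL : forall i : 'I_m, exists Li : R, lipschitz_on X (fun x => (row i (J x))^T) Li)
  (Hcgb : forall i : 'I_m, bounded_on X (fun x => (row i (J x))^T))
  (Hsv : exists2 smin : R, 0 < smin &
           forall x s, X x -> singular_value (J x) s -> smin <= s)
  (* (A2) constants *)
  (kappaH zeta : R) (HkH : 0 < kappaH) (Hzeta : 0 < zeta)
  (* algorithm parameters *)
  (taum1 alpha_max eps_f gamma theta sigma eps_tau : R)
  (Htaum1 : 0 < taum1) (Hamax : 0 < alpha_max <= 1) (Hepsf : 0 <= eps_f)
  (Hgamma : 0 < gamma < 1) (Htheta : 0 < theta < 1) (Hsigma : 0 < sigma < 1)
  (Heps_tau : 0 < eps_tau < 1) :
  exists2 kappa_l : R, 0 < kappa_l &
  forall (x : nat -> 'cV[R]_n) (alpha : nat -> R)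
         (gbar : nat -> 'cV[R]_n) (H : nat -> 'M[R]_n)
         (d : nat -> 'cV[R]_n) (y : nat -> 'cV[R]_m) (tau : nat -> R)
         (fplus fzero : nat -> R),
    (* initial step size *)
    0 < alpha 0%N <= alpha_max ->
    (* (A2) for every H_k *)
    (forall k, (H k)^T = H k) ->
    (forall k, opnorm_le (H k) kappaH) ->
    (forall k u, J (x k) *m u = 0 -> zeta * enorm u ^+ 2 <= dotv u (H k *m u)) ->
    (* the linear system *)
    (forall k, H k *m d k + (J (x k))^T *m y k = - gbar k) ->
    (forall k, J (x k) *m d k = - c (x k)) ->
    (* merit parameter update, with tau_{-1} = taum1 *)
    (forall k, tau k = tau_update eps_tau
                  (if k is k'.+1 then tau k' else taum1)
                  (tau_trial sigma (c (x k)) (H k) (gbar k) (d k))) ->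
    (* step acceptance / step size update; fplus k, fzero k are the objective
       estimates fbar(x_k^+; xi_k^+) and fbar(x_k; xi_k^0) *)
    (forall k,
       let xp := x k + alpha k *: d k in
       if tau k * fplus k + norm1 (c xp)
            <= tau k * fzero k + norm1 (c (x k))
               - alpha k * theta * Delta_l c (x k) (tau k) (gbar k) (d k)
               + 2 * tau k * eps_f
       then x k.+1 = xp /\ alpha k.+1 = Num.min alpha_max (alpha k / gamma)
       else x k.+1 = x k /\ alpha k.+1 = gamma * alpha k) ->
    (* (A1): X contains all iterates and trial iterates *)
    (forall k, X (x k) /\ X (x k + alpha k *: d k)) ->
    forall k : nat,
      kappa_l * tau k * (enorm (d k) ^+ 2 + enorm (c (x k)))
        <= Delta_l c (x k) (tau k) (gbar k) (d k).
Proof.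
case: Hsv => smin s0 Hsv; case: Hcb => Cb HCb.
pose a := smin ^+ 2.
have a0 : 0 < a by rewrite exprn_gt0.
pose Cb' := Num.max Cb 1.
have Cb0 : 0 < Cb' by rewrite lt_max ltr01 orbT.
pose K := 4 * kappaH * zeta + 8 * kappaH ^+ 2 + 2 * zeta ^+ 2.
have K0 : 0 <= K.
  have : 0 <= kappaH * zeta by rewrite mulr_ge0 // ltW.
  have : 0 <= kappaH ^+ 2 by rewrite exprn_ge0 // ltW.
  have : 0 <= zeta ^+ 2 by rewrite exprn_ge0 // ltW.
  rewrite /K; lra.
have az0 : 0 < a * zeta ^+ 2 by rewrite mulr_gt0 // exprn_gt0.
pose B := K * Cb' / (a * zeta ^+ 2).
have B0 : 0 <= B.
  apply: divr_ge0; last exact: ltW.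
  by apply: mulr_ge0 => //; exact: ltW.
have tB0 : 0 < taum1 * (1 + B).
  by apply: mulr_gt0 => //; lra.
case/andP: Hsigma => sg0 sg1.
pose kappa := Num.min (zeta / 4) (sigma / (taum1 * (1 + B))).
have kz : kappa <= zeta / 4 by rewrite ge_min lexx.
have ks : kappa <= sigma / (taum1 * (1 + B)) by rewrite ge_min lexx orbT.
have k0 : 0 < kappa by rewrite lt_min; apply/andP; split; apply: divr_gt0.
exists kappa => // x alpha gbar H d y tau fplus fzero Ha HT Hop Hnull Hsys Hjd Htau Hstep HX.
have Htb : forall k, (0 <= tau k <= taum1) /\
    (forall t, tau_trial sigma (c (x k)) (H k) (gbar k) (d k) = Some t -> tau k <= t).
  elim => [|k [/andP[tk0 tk1] _]].
    have [p1 p2 p3] := tau_update_props (tr := tau_trial sigma (c (x 0%N)) (H 0%N) (gbar 0%N) (d 0%N))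
       Heps_tau (ltW Htaum1) (fun t ht => tau_trial_ge0 sg1 ht).
    by rewrite Htau p1 p2 /=; split => // t ht; rewrite Htau; exact: p3.
  have [p1 p2 p3] := tau_update_props (tr := tau_trial sigma (c (x k.+1)) (H k.+1) (gbar k.+1) (d k.+1))
     Heps_tau tk0 (fun t ht => tau_trial_ge0 sg1 ht).
  rewrite Htau p1 (le_trans p2 tk1) /=; split => // t ht; rewrite Htau; exact: p3.
move=> k.
have [/andP[t0 t1] Ht] := Htb k.
have Xk := (HX k).1.
have Hray := ray_sv s0 (fun s hs => Hsv (x k) s Xk hs).
have db := decomp_bound a0 Hzeta HkH Hray (HT k) (Hop k) (Hnull k) (Hjd k).
have DL := delta_lower t0 (andb_true_intro (conj sg0 sg1)) Ht.
move: db DL; set mx := Num.max _ 0 => db DL.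
have mx0 : 0 <= mx by rewrite le_max lexx orbT.
have ec0 := enorm_ge0 (c (x k)).
have ecb : enorm (c (x k)) <= Cb' by rewrite le_max HCb.
have ecn := enorm_le_norm1 (c (x k)).
rewrite -(enorm_sq (c (x k))) in db.
rewrite enorm_sq.
set dd := dotv (d k) (d k) in db *.
set ec := enorm (c (x k)) in ec0 ecb ecn db *.
have ddb : dd <= 4 / zeta * mx + B * ec.
  have h1 : a * (zeta ^+ 2 * dd) <= a * (4 * zeta * mx) + K * Cb' * ec.
    apply: (le_trans db); rewrite lerD2l.
    have h : ec ^+ 2 <= Cb' * ec by rewrite expr2 ler_wpM2r.
    have := ler_wpM2l K0 h; rewrite mulrA /K => h2; by rewrite -[X in _ <= X]mulrA.
  have -> : 4 / zeta * mx + B * ec = (a * (4 * zeta * mx) + K * Cb' * ec) / (a * zeta ^+ 2).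
    by rewrite /B; field; rewrite gt_eqF // gt_eqF.
  rewrite ler_pdivlMr //; apply: (le_trans _ h1); rewrite le_eqVlt; apply/orP; left; apply/eqP; ring.
have S1 : kappa * (4 / zeta) <= 1.
  have e : zeta / 4 * (4 / zeta) = 1 by field; rewrite gt_eqF.
  have z4 : 0 <= 4 / zeta by rewrite divr_ge0 // ltW.
  by have := ler_wpM2r z4 kz; rewrite e.
have S2 : kappa * (taum1 * (1 + B)) <= sigma.
  by move: ks; rewrite ler_pdivlMr.
have kt0 : 0 <= kappa * tau k by rewrite mulr_ge0 // ltW.
have P1 : kappa * tau k * dd <= kappa * tau k * (4 / zeta * mx + B * ec) by apply: ler_wpM2l.
have tm0 : 0 <= tau k * mx by rewrite mulr_ge0.
have P2 : (tau k * mx) * (kappa * (4 / zeta)) <= tau k * mx by apply: ler_piMr => //; rewrite mulr_ge0 // ?divr_ge0 // ltW.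
have kBe : 0 <= kappa * (1 + B) * ec by rewrite !mulr_ge0 // ?ltW //; lra.
have P3 : tau k * (kappa * (1 + B) * ec) <= taum1 * (kappa * (1 + B) * ec) by apply: ler_wpM2r.
have P4 : (kappa * (taum1 * (1 + B))) * ec <= sigma * ec by apply: ler_wpM2r.
have P5 : sigma * ec <= sigma * norm1 (c (x k)) by apply: ler_wpM2l => //; exact: ltW.
apply: le_trans DL.
lra.
Qed.
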